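(* Let $s>2$ be an integer, $A_s=\{0,1,\dots,s-1\}$, and let $A_0,A_1$ be disjoint subsets of $A_s$ with $A_0\cup A_1=A_s$, $A_0\neq A_s\neq A_1$. For a sequence $(\alpha_n)\in L_s$ define $(\beta_n)$ by $\beta_1=0$ if $\alpha_1\in A_0$, $\beta_1=1$ if $\alpha_1\in A_1$, and for $n\ge1$, $\beta_{n+1}=\beta_n$ if $\alpha_{n+1}=\alpha_n$ and $\beta_{n+1}=1-\beta_n$ if $\alpha_{n+1}\neq\alpha_n$, and set $F((\alpha_n))=\Delta^{2*}_{\beta_1\beta_2\dots}$. Then $f(\Delta^{s*}_{\alpha_1\alpha_2\dots})=F((\alpha_n))$ well defines a function $f:[0,1]\to[0,1]$; that is, whenever $(\alpha_n),(\alpha'_n)\in L_s$ satisfy $\Delta^{s*}_{\alpha_1\alpha_2\dots}=\Delta^{s*}_{\alpha'_1\alpha'_2\dots}$, we have $F((\alpha_n))=F((\alpha'_n))$.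
   Context: $L_s=A_s\times A_s\times\cdots$ denotes the space of sequences $(\alpha_n)$ with $\alpha_n\in A_s$. The $s*$-representation is an encoding of $[0,1]$ topologically equivalent to the classical $s$-adic one: there is a continuous strictly monotone surjection $h_s:[0,1]\to[0,1]$ such that $\Delta^{s*}_{\alpha_1\alpha_2\dots}=h_s\big(\sum_{n\ge1}\alpha_n s^{-n}\big)$ for every $(\alpha_n)\in L_s$. Likewise the $2*$-representation is given by a continuous strictly monotone surjection $h_2:[0,1]\to[0,1]$ via $\Delta^{2*}_{\beta_1\beta_2\dots}=h_2\big(\sum_{n\ge1}\beta_n 2^{-n}\big)$, $\beta_n\in\{0,1\}$. *)

(* Defs.v *)
From Stdlib Require Import Reals Lra Arith.
From Coquelicot Require Import Coquelicot.
Open Scope R_scope.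

(* Sequences (alpha_n)_{n>=1} are represented as a : nat -> nat with
   a k = alpha_{k+1}.  Membership in L_s: every digit lies in A_s = {0,..,s-1}. *)
Definition in_Ls (s : nat) (a : nat -> nat) : Prop := forall n, (a n < s)%nat.

Definition sadic_val (s : nat) (a : nat -> nat) : R :=
  Series (fun k => INR (a k) / INR s ^ (S k)).

Definition cont_on01 (h : R -> R) : Prop :=
  forall x, 0 <= x <= 1 -> forall eps, 0 < eps -> exists delta, 0 < delta /\
    forall y, 0 <= y <= 1 -> Rabs (y - x) < delta -> Rabs (h y - h x) < eps.

Definition strict_mono01 (h : R -> R) : Prop :=
  (forall x y, 0 <= x -> x < y -> y <= 1 -> h x < h y) \/
  (forall x y, 0 <= x -> x < y -> y <= 1 -> h y < h x).

Definition surj01 (h : R -> R) : Prop :=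
  (forall x, 0 <= x <= 1 -> 0 <= h x <= 1) /\
  (forall y, 0 <= y <= 1 -> exists x, 0 <= x <= 1 /\ h x = y).

Definition good_h (h : R -> R) : Prop :=
  cont_on01 h /\ strict_mono01 h /\ surj01 h.

Definition Delta_star (hs : R -> R) (s : nat) (a : nat -> nat) : R :=
  hs (sadic_val s a).

(* beta sequence: b k = beta_{k+1}.  A1 is the (boolean) membership test
   of A_1; beta_1 = 1 iff alpha_1 in A_1 (equivalently 0 iff alpha_1 in A_0,
   as A_0, A_1 partition A_s). *)
Fixpoint beta (A1 : nat -> bool) (a : nat -> nat) (k : nat) : nat :=
  match k with
  | O => if A1 (a O) then 1%nat else 0%nat
  | S k' => if Nat.eqb (a (S k')) (a k') then beta A1 a k'
            else (1 - beta A1 a k')%nat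
  end.

Definition F (h2 : R -> R) (A1 : nat -> bool) (a : nat -> nat) : R :=
  Delta_star h2 2 (beta A1 a).

(* Main.v *)
Require Import Defs.
From Stdlib Require Import Reals Lra Lia Arith Classical.
From Coquelicot Require Import Coquelicot.
Open Scope R_scope.

Lemma geom_tail (q : R) (m : nat) : 1 < q ->
  is_series (fun k => / q ^ (S (m + k))) (/ q ^ m / (q - 1)).
Proof.
  intros Hq.
  assert (Hq0 : q <> 0) by lra.
  assert (Hr : Rabs (/ q) < 1).
  { rewrite Rabs_pos_eq. apply (Rmult_lt_reg_l q); [lra|]; rewrite Rinv_r; lra. left; apply Rinv_0_lt_compat; lra. }
  pose proof (is_series_scal_l (/ q ^ (S m)) _ _ (is_series_geom _ Hr)) as H.
  replace (/ q ^ m / (q - 1)) with (scal (/ q ^ (S m)) (/ (1 - / q))).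
  - eapply is_series_ext; [|exact H]. intros k. simpl.
    change (scal (/ (q * q ^ m)) (/ q ^ k)) with (/ (q * q ^ m) * (/ q) ^ k).
    rewrite pow_add, <- Rinv_pow by lra. rewrite <- Rinv_mult. f_equal. ring.
  - change (scal (/ q ^ (S m)) (/ (1 - / q))) with (/ q ^ (S m) * (/ (1 - / q))).
    simpl. assert (q ^ m <> 0) by (apply pow_nonzero; lra).
    field. repeat split; lra.
Qed.

Lemma ex_geom (q : R) (m : nat) : 1 < q -> ex_series (fun k => / q ^ (S (m + k))).
Proof. intros Hq. eexists. apply geom_tail; auto. Qed.

Lemma ex_bounded (q c : R) (m : nat) (u : nat -> R) : 1 < q ->
  (forall k, 0 <= u k <= c / q ^ (S (m + k))) -> ex_series u.
Proof.
  intros Hq Hu. apply (@ex_series_le R_AbsRing R_CompleteNormedModule _ (fun k => c * / q ^ (S (m + k)))).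
  - intros k. change (norm (u k)) with (Rabs (u k)). rewrite Rabs_pos_eq by (apply Hu).
    apply Hu.
  - exact (@ex_series_scal_l R_AbsRing R_NormedModule c _ (ex_geom q m Hq)).
Qed.

Lemma Series_nonneg (u : nat -> R) : ex_series u -> (forall k, 0 <= u k) -> 0 <= Series u.
Proof.
  intros He Hu. assert (Series (fun _ => 0) = 0).
  { rewrite (Series_ext _ (fun n => 0 * u n)) by (intros; ring).
    rewrite Series_scal_l. ring. }
  rewrite <- H. apply Series_le; auto. intros; split; [lra|auto].
Qed.

Lemma term_le_Series (u : nat -> R) k : ex_series u -> (forall k, 0 <= u k) -> u k <= Series u.
Proof.
  intros He Hu. rewrite (Series_incr_n u (S k)) by (lia || auto). simpl.
  assert (0 <= Series (fun j => u (S (k + j)))).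
  { apply Series_nonneg; auto. apply (ex_series_incr_n u (S k)) in He. exact He. }
  assert (u k <= sum_f_R0 u k).
  { destruct k. simpl; lra. simpl. 
    assert (0 <= sum_f_R0 u k). { clear -Hu. induction k; simpl; auto. specialize (Hu (S k)); lra. }
    lra. }
  lra.
Qed.

Lemma div_zero (c p : R) : 0 < p -> c / p = 0 -> c = 0.
Proof. intros Hp H. replace c with (c / p * p) by (field; lra). rewrite H; ring. Qed.

Lemma digit_bound (s d : nat) : (d < s)%nat -> 0 <= INR d <= INR s - 1.
Proof. intros H. split. apply pos_INR. apply le_INR in H. rewrite S_INR in H. lra. Qed.

Lemma term_bound (s : nat) (a : nat -> nat) m : (1 < s)%nat -> in_Ls s a ->
  forall k, 0 <= INR (a (m + k)%nat) / INR s ^ S (m + k) <= (INR s - 1) / INR s ^ S (m + k).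
Proof.
  intros Hs Ha k. assert (Hs' : 1 < INR s) by (apply lt_1_INR; lia).
  assert (0 < INR s ^ S (m + k)) by (apply pow_lt; lra).
  destruct (digit_bound s (a (m+k)%nat) (Ha _)).
  split. apply Rdiv_le_0_compat; lra.
  unfold Rdiv. apply Rmult_le_compat_r; auto. left; apply Rinv_0_lt_compat; auto.
Qed.

Lemma ex_sadic s a : (1 < s)%nat -> in_Ls s a -> ex_series (fun k => INR (a k) / INR s ^ S k).
Proof.
  intros Hs Ha. apply (ex_bounded (INR s) (INR s - 1) 0).
  apply lt_1_INR; lia. intros k. apply (term_bound s a 0 Hs Ha k).
Qed.

Lemma sadic_01 s a : (1 < s)%nat -> in_Ls s a -> 0 <= sadic_val s a <= 1.
Proof.
  intros Hs Ha. assert (Hs' : 1 < INR s) by (apply lt_1_INR; lia).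
  unfold sadic_val. split.
  - apply Series_nonneg. apply ex_sadic; auto. intros k; apply (term_bound s a 0 Hs Ha k).
  - eapply Rle_trans. apply (Series_le _ (fun k => (INR s - 1) * / INR s ^ S (0 + k))).
    + intros k; apply (term_bound s a 0 Hs Ha k).
    + exact (@ex_series_scal_l R_AbsRing R_NormedModule _ _ (ex_geom _ 0 Hs')).
    + rewrite Series_scal_l. rewrite (is_series_unique _ _ (geom_tail _ 0 Hs')). simpl.
      right; field; lra.
Qed.

Lemma shift_split (d : nat -> R) n : ex_series d -> (forall k, (k < n)%nat -> d k = 0) ->
  Series d = d n + Series (fun j => d (S (n + j))).
Proof.
  intros He Hz. rewrite (Series_incr_n_aux d n Hz).
  rewrite Series_incr_1. rewrite Nat.add_0_r. f_equal. apply Series_ext; intros; f_equal; lia.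
  apply (ex_series_incr_n d n) in He. exact He.
Qed.

Lemma sadic_key s a a' n : (1 < s)%nat -> in_Ls s a -> in_Ls s a' ->
  sadic_val s a = sadic_val s a' -> (forall k, (k < n)%nat -> a k = a' k) ->
  (a' n < a n)%nat ->
  a n = S (a' n) /\ forall j, a (S (n + j)) = 0%nat /\ a' (S (n + j)) = (s - 1)%nat.
Proof.
  intros Hs Ha Ha' Hv Hp Hlt.
  assert (Hs' : 1 < INR s) by (apply lt_1_INR; lia).
  set (sR := INR s) in *.
  set (x := fun k => INR (a k) / sR ^ S k).
  set (y := fun k => INR (a' k) / sR ^ S k).
  assert (Ex : ex_series x) by (apply ex_sadic; auto).
  assert (Ey : ex_series y) by (apply ex_sadic; auto).
  assert (Hd : Series (fun k => x k - y k) = 0).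
  { rewrite Series_minus; auto. unfold sadic_val in Hv. unfold x, y, sR. lra. }
  rewrite (shift_split _ n) in Hd.
  2:{ apply (@ex_series_minus R_AbsRing R_NormedModule); auto. }
  2:{ intros k Hk. unfold x, y. rewrite Hp; auto. ring. }
  set (X := Series (fun j => x (S (n + j)))).
  set (Z := Series (fun j => (sR - 1 - INR (a' (S (n + j)))) / sR ^ S (S (n + j)))).
  set (W := Series (fun j => (sR - 1) * / sR ^ S (S n + j))).
  assert (EX : ex_series (fun j => x (S (n + j)))).
  { apply (ex_bounded sR (sR - 1) (S n)); auto. intros j. apply (term_bound s a (S n) Hs Ha j). }
  assert (EZ : ex_series (fun j => (sR - 1 - INR (a' (S (n + j)))) / sR ^ S (S (n + j)))).
  { apply (ex_bounded sR (sR - 1) (S n)); auto. intros j.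
    destruct (digit_bound s (a' (S (n + j))) (Ha' _)).
    assert (0 < sR ^ S (S (n + j))) by (apply pow_lt; lra).
    split. apply Rdiv_le_0_compat; unfold sR in *; lra.
    unfold Rdiv. apply Rmult_le_compat_r. left; apply Rinv_0_lt_compat; auto. unfold sR in *; lra. }
  assert (EW : ex_series (fun j => (sR - 1) * / sR ^ S (S n + j))).
  { exact (@ex_series_scal_l R_AbsRing R_NormedModule _ _ (ex_geom _ (S n) Hs')). }
  assert (HW : W = / sR ^ S n).
  { unfold W. rewrite Series_scal_l. rewrite (is_series_unique _ _ (geom_tail _ (S n) Hs')).
    assert (sR ^ S n <> 0) by (apply pow_nonzero; lra). field. split; lra. }
  assert (Htail : Series (fun j => x (S (n + j)) - y (S (n + j))) = X + Z - W).
  { unfold X, Z, W. rewrite <- Series_plus, <- Series_minus; auto.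
    apply Series_ext. intros j. unfold x, y. simpl. field.
    split; [apply pow_nonzero; lra | lra].
    apply (@ex_series_plus R_AbsRing R_NormedModule); auto. }
  rewrite Htail in Hd.
  assert (HX : 0 <= X) by (apply Series_nonneg; auto; intros j; apply (term_bound s a (S n) Hs Ha j)).
  assert (HZ : 0 <= Z).
  { apply Series_nonneg; auto. intros j. destruct (digit_bound s (a' (S (n + j))) (Ha' _)).
    assert (0 < sR ^ S (S (n + j))) by (apply pow_lt; lra).
    apply Rdiv_le_0_compat; unfold sR in *; lra. }
  assert (HP : 0 < / sR ^ S n) by (apply Rinv_0_lt_compat, pow_lt; lra).
  assert (HD : INR (a' n) + 1 <= INR (a n)) by (rewrite <- S_INR; apply le_INR; lia).
  assert (Hdn : x n - y n = (INR (a n) - INR (a' n)) * / sR ^ S n) by (unfold x, y; field; apply pow_nonzero; lra).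
  rewrite Hdn, HW in Hd.
  assert (X = 0 /\ Z = 0 /\ INR (a n) = INR (a' n) + 1) as [X0 [Z0 D1]].
  { assert ((INR (a n) - INR (a' n) - 1) * / sR ^ S n >= 0).
    { apply Rle_ge, Rmult_le_pos; lra. }
    assert (X = 0) by nra. assert (Z = 0) by nra. split; [|split]; auto.
    assert ((INR (a n) - INR (a' n) - 1) * / sR ^ S n = 0) by nra.
    apply Rmult_integral in H2. destruct H2; lra. }
  split.
  { apply INR_eq. rewrite S_INR. lra. }
  intros j. split.
  - assert (Hx : x (S (n + j)) = 0).
    { pose proof (term_le_Series _ j EX (fun j => proj1 (term_bound s a (S n) Hs Ha j))).
      pose proof (proj1 (term_bound s a (S n) Hs Ha j)). fold X in H. rewrite X0 in H. cbv beta in *. unfold x in *. simpl in *. fold sR in H0. lra. }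
    unfold x in Hx. apply div_zero in Hx; [|apply pow_lt; lra].
    apply INR_eq. exact Hx.
  - assert (Hz : 0 <= (sR - 1 - INR (a' (S (n + j)))) / sR ^ S (S (n + j))).
    { destruct (digit_bound s (a' (S (n + j))) (Ha' _)).
      assert (0 < sR ^ S (S (n + j))) by (apply pow_lt; lra).
      apply Rdiv_le_0_compat; unfold sR in *; lra. }
    pose proof (term_le_Series _ j EZ). fold Z in H.
    assert (Hz0 : (sR - 1 - INR (a' (S (n + j)))) / sR ^ S (S (n + j)) = 0).
    { assert (Hnn : forall k, 0 <= (sR - 1 - INR (a' (S (n + k)))) / sR ^ S (S (n + k))).
      { intros k. destruct (digit_bound s (a' (S (n + k))) (Ha' _)).
        assert (0 < sR ^ S (S (n + k))) by (apply pow_lt; lra).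
        apply Rdiv_le_0_compat; unfold sR in *; lra. }
      specialize (H Hnn). lra. }
    apply div_zero in Hz0; [|apply pow_lt; lra].
    apply INR_eq. rewrite minus_INR by lia. simpl. unfold sR in Hz0. lra.
Qed.

Lemma bin_eq (b b' : nat -> nat) n : in_Ls 2 b -> in_Ls 2 b' ->
  (forall k, (k < n)%nat -> b k = b' k) -> (b n <= 1)%nat -> (b' n <= 1)%nat ->
  (forall j, b (S (n + j)) = (1 - b n)%nat) -> (forall j, b' (S (n + j)) = (1 - b' n)%nat) ->
  sadic_val 2 b = sadic_val 2 b'.
Proof.
  intros Hb Hb' Hp H1 H1' Ht Ht'.
  assert (H2 : 1 < INR 2) by (simpl; lra).
  assert (Ex := ex_sadic 2 b ltac:(lia) Hb).
  assert (Ey := ex_sadic 2 b' ltac:(lia) Hb').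
  unfold sadic_val. apply Rminus_diag_uniq. rewrite <- Series_minus; auto.
  rewrite (shift_split _ n).
  2:{ apply (@ex_series_minus R_AbsRing R_NormedModule); auto. }
  2:{ intros k Hk. rewrite Hp; auto. ring. }
  rewrite (Series_ext _ (fun j => (INR (b' n) - INR (b n)) * / INR 2 ^ S (S n + j))).
  2:{ intros j. rewrite Ht, Ht'. rewrite !minus_INR by lia. simpl. field.
      apply pow_nonzero; lra. }
  rewrite Series_scal_l. rewrite (is_series_unique _ _ (geom_tail _ (S n) H2)).
  assert (INR 2 ^ S n <> 0) by (apply pow_nonzero; lra).
  simpl. simpl in H. assert ((1+1)^n <> 0) by (apply pow_nonzero; lra). field. auto.
Qed.

Lemma beta_le1 A1 a k : (beta A1 a k <= 1)%nat.
Proof.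
  induction k; cbn [beta]. destruct (A1 (a 0%nat)); lia.
  destruct (Nat.eqb (a (S k)) (a k)); lia.
Qed.

Lemma beta_prefix A1 a a' n : (forall k, (k < n)%nat -> a k = a' k) ->
  forall k, (k < n)%nat -> beta A1 a k = beta A1 a' k.
Proof.
  intros Hp k. induction k; intros Hk; simpl.
  - rewrite Hp; auto.
  - rewrite (Hp (S k)), (Hp k), IHk by lia. reflexivity.
Qed.

Lemma beta_S A1 a k : beta A1 a (S k) =
  if Nat.eqb (a (S k)) (a k) then beta A1 a k else (1 - beta A1 a k)%nat.
Proof. reflexivity. Qed.

Lemma beta_tail A1 a n c : (forall j, a (S (n + j)) = c) -> c <> a n ->
  forall j, beta A1 a (S (n + j)) = (1 - beta A1 a n)%nat.
Proof.
  intros Hc Hne j. induction j.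
  - rewrite Nat.add_0_r. cbn [beta]. specialize (Hc 0%nat). rewrite Nat.add_0_r in Hc.
    rewrite Hc. destruct (Nat.eqb_spec c (a n)); [contradiction|reflexivity].
  - replace (S (n + S j)) with (S (S (n + j))) by lia. rewrite beta_S.
    pose proof (Hc (S j)) as H1. replace (S (n + S j)) with (S (S (n + j))) in H1 by lia.
    rewrite H1, (Hc j), Nat.eqb_refl. exact IHj.
Qed.

Lemma first_diff (a a' : nat -> nat) : (exists k, a k <> a' k) ->
  exists n, a n <> a' n /\ forall k, (k < n)%nat -> a k = a' k.
Proof.
  intros [k0 Hk0]. apply NNPP. intros Hno. apply Hk0.
  induction k0 as [k IH] using lt_wf_ind.
  destruct (Nat.eq_dec (a k) (a' k)) as [e|ne]; auto.
  exfalso. apply Hno. exists k. split; auto. intros j Hj.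
  destruct (Nat.eq_dec (a j) (a' j)) as [e|n0]; [exact e|].
  apply IH; auto.
Qed.

Lemma main_case s A1 a a' n : (1 < s)%nat -> in_Ls s a -> in_Ls s a' ->
  sadic_val s a = sadic_val s a' -> (forall k, (k < n)%nat -> a k = a' k) ->
  (a' n < a n)%nat ->
  sadic_val 2 (beta A1 a) = sadic_val 2 (beta A1 a').
Proof.
  intros Hs Ha Ha' Hv Hp Hlt.
  destruct (sadic_key s a a' n Hs Ha Ha' Hv Hp Hlt) as [Han Ht].
  assert (Hl : forall b, in_Ls 2 (beta A1 b)).
  { intros b k. pose proof (beta_le1 A1 b k). lia. }
  apply (bin_eq _ _ n); auto.
  - apply beta_prefix; auto.
  - apply beta_le1.
  - apply beta_le1.
  - apply (beta_tail A1 a n 0%nat). intros j; apply Ht. lia.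
  - apply (beta_tail A1 a' n (s - 1)%nat). intros j; apply Ht.
    pose proof (Ha n). lia.
Qed.

Theorem lemma2 (s : nat) (hs h2 : R -> R) (A0 A1 : nat -> bool) :
  (2 < s)%nat ->
  good_h hs -> good_h h2 ->
  (forall x, A0 x = true -> (x < s)%nat) ->
  (forall x, A1 x = true -> (x < s)%nat) ->
  (forall x, ~ (A0 x = true /\ A1 x = true)) ->
  (forall x, (x < s)%nat -> A0 x = true \/ A1 x = true) ->
  (exists x, (x < s)%nat /\ A0 x = false) ->
  (exists x, (x < s)%nat /\ A1 x = false) ->
  forall a a' : nat -> nat, in_Ls s a -> in_Ls s a' ->
    Delta_star hs s a = Delta_star hs s a' ->
    F h2 A1 a = F h2 A1 a'.
Proof.
  intros Hs Hhs Hh2 _ _ _ _ _ _ a a' Ha Ha' HD.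
  assert (Hs1 : (1 < s)%nat) by lia.
  assert (Hv : sadic_val s a = sadic_val s a').
  { destruct Hhs as [_ [Hm _]]. unfold Delta_star in HD.
    pose proof (sadic_01 s a Hs1 Ha). pose proof (sadic_01 s a' Hs1 Ha').
    destruct (Rtotal_order (sadic_val s a) (sadic_val s a')) as [Hl|[He|Hg]]; auto;
    exfalso; destruct Hm as [Hm|Hm].
    - specialize (Hm _ _ (proj1 H) Hl (proj2 H0)). lra.
    - specialize (Hm _ _ (proj1 H) Hl (proj2 H0)). lra.
    - specialize (Hm _ _ (proj1 H0) Hg (proj2 H)). lra.
    - specialize (Hm _ _ (proj1 H0) Hg (proj2 H)). lra. }
  unfold F, Delta_star. f_equal.
  destruct (classic (exists k, a k <> a' k)) as [Hex|Hn].
  - destruct (first_diff a a' Hex) as [n [Hne Hp]].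
    destruct (Nat.lt_gt_cases (a n) (a' n)) as [[Hlt|Hgt] _]; auto.
    + symmetry. apply (main_case s A1 a' a n); auto. intros k Hk; symmetry; auto.
    + apply (main_case s A1 a a' n); auto.
  - unfold sadic_val. apply Series_ext. intros k. do 2 f_equal.
    apply (beta_prefix A1 a a' (S k)); [|lia].
    intros j _. apply NNPP. intros Hj. apply Hn. exists j; auto.
Qed.
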